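(* Assume the standing setting and let $\epsilon>0$. If $|u^0_i-u^0_{i+1}|\le \epsilon/3^{M}$ for all $i\in\mathbb Z$, then for every coarse index $j$, $|v_0-u_0|\le\epsilon$, i.e. $|w^N_j-u^M_{jr}|\le\epsilon$.
   Context: Standing setting. Let $F:\mathbb R\to\mathbb R$ be continuously differentiable. For a spatial step $\eta>0$, a time step $\tau>0$ and an initial sequence $(z^0_i)_{i\in\mathbb Z}$ of reals, the EFC (Euler forward in time, centered in space) scheme produces $(z^n_i)_{i\in\mathbb Z,\,n\in\mathbb N}$ by $z^{n+1}_i=z^n_i-F'(z^n_i)\frac{\tau}{2\eta}\,(z^n_{i+1}-z^n_{i-1})$. It satisfies the CFL condition if $|F'(z^n_i)|\,\tau/\eta\le 1$ for all $i\in\mathbb Z$, $n\in\mathbb N$. Fix $a\in\mathbb R$, $h>0$, $\Delta t>0$, an integer $N>1$ and an even integer $r\ge 2$; put $k=h/r$, $dt=\Delta t/r$, $M=Nr$. Let $u_0:\mathbb R\to\mathbb R$. The coarse solution $(w^n_j)$ is the EFC scheme with $\eta=h$, $\tau=\Delta t$, $w^0_j=u_0(a+jh)$; the fine solution $(u^n_i)$ is the EFC scheme with $\eta=k$, $\tau=dt$, $u^0_i=u_0(a+ik)$ (so $w^0_j=u^0_{jr}$). Both are assumed to satisfy the CFL condition. Coarse nodes: $x_j=a+jh$. Interpolant: for a fixed coarse index $j$, set $p_1=x_j$, $p_2=x_{j+1}$, $d_1=w^N_j$, $d_2=w^N_{j+1}$, let $q$ be the cubic with $q(0)=p_1$, $q(1)=p_2$,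 $q'(0)=d_1$, $q'(1)=d_2$, and let $v(t)=q'(t)=(6p_1-6p_2+3d_1+3d_2)t^2+(-6p_1+6p_2-4d_1-2d_2)t+d_1$ for $t\in[0,1]$. For $0\le m\le r$ put $v_m=v(m/r)$ and $u_m=u^M_{jr+m}$ (the fine solution at time step $M$ at the fine node $x_j+mk$). (In this statement $u_0$ denotes $u^M_{jr}$, not the initial function.) *)

(* Defs.v *)
From Stdlib Require Import Reals ZArith Arith.
Open Scope R_scope.

(* EFC scheme (Euler forward in time, centred in space), driven by the
   derivative dF = F' of the flux:
   z^{n+1}_i = z^n_i - F'(z^n_i) * tau/(2 eta) * (z^n_{i+1} - z^n_{i-1}). *)
Fixpoint efc (dF : R -> R) (eta tau : R) (z0 : Z -> R) (n : nat) : Z -> R :=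
  match n with
  | O => z0
  | S n' => let z := efc dF eta tau z0 n' in
            fun i => z i - dF (z i) * (tau / (2 * eta)) * (z (i + 1)%Z - z (i - 1)%Z)
  end.

Definition CFL (dF : R -> R) (eta tau : R) (z0 : Z -> R) : Prop :=
  forall (n : nat) (i : Z), Rabs (dF (efc dF eta tau z0 n i)) * tau / eta <= 1.

(* v = q' for the cubic Hermite interpolant q. *)
Definition hermite_v (p1 p2 d1 d2 t : R) : R :=
  (6*p1 - 6*p2 + 3*d1 + 3*d2) * t^2 + (-6*p1 + 6*p2 - 4*d1 - 2*d2) * t + d1.

(* Main.v *)
Require Import Defs.
From Stdlib Require Import Reals ZArith Arith Lra Lia Psatz.
Open Scope R_scope.

Lemma absb x y : Rabs x <= y -> -y <= x <= y.
Proof. unfold Rabs; destruct (Rcase_abs x); intros; lra. Qed.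

Lemma cprod c B e : Rabs c <= 1/2 -> Rabs B <= 2*e -> Rabs (c*B) <= e.
Proof. intros H1 H2. rewrite Rabs_mult. pose proof (Rabs_pos c); pose proof (Rabs_pos B). nra. Qed.

Lemma efcS dF eta tau z0 n i : efc dF eta tau z0 (S n) i =
  efc dF eta tau z0 n i - dF (efc dF eta tau z0 n i) * (tau / (2 * eta)) *
   (efc dF eta tau z0 n (i+1)%Z - efc dF eta tau z0 n (i-1)%Z).
Proof. reflexivity. Qed.

Lemma coefb dF eta tau z0 (He : 0 < eta) (Ht : 0 < tau) (H : CFL dF eta tau z0) n i :
  Rabs (dF (efc dF eta tau z0 n i) * (tau / (2 * eta))) <= 1/2.
Proof.
  specialize (H n i). rewrite Rabs_mult. rewrite (Rabs_right (tau / (2*eta))).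
  2:{ apply Rle_ge. left. apply Rdiv_lt_0_compat; lra. }
  replace (Rabs (dF (efc dF eta tau z0 n i)) * (tau / (2 * eta))) with
    ((Rabs (dF (efc dF eta tau z0 n i)) * tau / eta) / 2) by (field; lra). lra.
Qed.

Lemma diffb dF eta tau z0 D (He : 0 < eta) (Ht : 0 < tau) (H : CFL dF eta tau z0)
  (H0 : forall i, Rabs (z0 i - z0 (i+1)%Z) <= D) :
  forall n i, Rabs (efc dF eta tau z0 n i - efc dF eta tau z0 n (i+1)%Z) <= 3^n * D.
Proof.
  induction n; intro i.
  - simpl. rewrite Rmult_1_l. apply H0.
  - rewrite !efcS.
    replace (i + 1 + 1)%Z with ((i+1)+1)%Z by lia.
    replace (i + 1 - 1)%Z with i by lia.
    set (z := efc dF eta tau z0 n).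
    assert (A1 := IHn i). assert (A2 := IHn (i-1)%Z). assert (A3 := IHn (i+1)%Z).
    replace (i - 1 + 1)%Z with i in A2 by lia. fold z in A1, A2, A3.
    assert (B1 : Rabs (dF (z i) * (tau / (2 * eta)) * (z (i + 1)%Z - z (i - 1)%Z)) <= 3^n*D).
    { apply cprod. apply coefb; auto. apply absb in A1; apply absb in A2.
      apply Rabs_le; lra. }
    assert (B2 : Rabs (dF (z (i+1)%Z) * (tau / (2 * eta)) * (z (i + 1 + 1)%Z - z i)) <= 3^n*D).
    { apply cprod. apply coefb; auto. apply absb in A1; apply absb in A3.
      apply Rabs_le; lra. }
    apply absb in A1; apply absb in B1; apply absb in B2.
    apply Rabs_le. simpl. lra.
Qed.

Lemma driftb dF eta tau z0 D (He : 0 < eta) (Ht : 0 < tau) (H : CFL dF eta tau z0)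
  (H0 : forall i, Rabs (z0 i - z0 (i+1)%Z) <= D) :
  forall n i, Rabs (efc dF eta tau z0 n i - z0 i) <= (3^n - 1)/2 * D.
Proof.
  induction n; intro i.
  - simpl. unfold Rminus at 1. rewrite Rplus_opp_r, Rabs_R0. lra.
  - rewrite efcS. set (z := efc dF eta tau z0 n).
    assert (A1 := diffb _ _ _ _ _ He Ht H H0 n i).
    assert (A2 := diffb _ _ _ _ _ He Ht H H0 n (i-1)%Z).
    replace (i - 1 + 1)%Z with i in A2 by lia. fold z in A1, A2.
    assert (B1 : Rabs (dF (z i) * (tau / (2 * eta)) * (z (i + 1)%Z - z (i - 1)%Z)) <= 3^n*D).
    { apply cprod. apply coefb; auto. apply absb in A1; apply absb in A2.
      apply Rabs_le; lra. }
    assert (C := IHn i). fold z in C.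
    apply absb in B1; apply absb in C. apply Rabs_le. simpl. lra.
Qed.

Lemma tele (f : Z -> R) D (H : forall i, Rabs (f i - f (i+1)%Z) <= D) :
  forall (m : nat) i, Rabs (f i - f (i + Z.of_nat m)%Z) <= INR m * D.
Proof.
  induction m; intro i.
  - simpl. replace (i+0)%Z with i by lia. replace (f i - f i) with 0 by ring. rewrite Rabs_R0. lra.
  - rewrite S_INR. specialize (IHm i). specialize (H (i + Z.of_nat m)%Z).
    replace (i + Z.of_nat (S m))%Z with (i + Z.of_nat m + 1)%Z by lia.
    apply absb in IHm; apply absb in H. apply Rabs_le; lra.
Qed.

Lemma bern s : INR s + 1 <= 3 ^ s.
Proof. induction s. simpl; lra. rewrite S_INR. change (3^S s) with (3 * 3^s). pose proof (pos_INR s). lra. Qed.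

Lemma keyineq N r : (1 <= N)%nat -> (1 <= r)%nat -> INR r * 3^N <= 3^(N*r).
Proof.
  intros HN Hr. destruct r as [|s]; [lia|].
  replace (N * S s)%nat with (N + N*s)%nat by lia. rewrite pow_add.
  rewrite S_INR. assert (3^s <= 3^(N*s)).
  { apply Rle_pow; [lra| nia]. }
  pose proof (bern s). pose proof (pow_le 3 N). nra.
Qed.

Theorem proposition7
  (F dF : R -> R)
  (HF : forall x, derivable_pt_lim F x (dF x))
  (HdF : forall x, continuity_pt dF x)
  (a h Dt : R) (N r : nat) (u0 : R -> R) (eps : R)
  (Hh : 0 < h) (HDt : 0 < Dt) (HN : (1 < N)%nat)
  (Hr_even : Nat.Even r) (Hr2 : (2 <= r)%nat)
  (Hcoarse : CFL dF h Dt (fun j => u0 (a + IZR j * h)))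
  (Hfine : CFL dF (h / INR r) (Dt / INR r) (fun i => u0 (a + IZR i * (h / INR r))))
  (Heps : 0 < eps)
  (Hinit : forall i : Z,
      Rabs (efc dF (h / INR r) (Dt / INR r) (fun i => u0 (a + IZR i * (h / INR r))) 0 i
          - efc dF (h / INR r) (Dt / INR r) (fun i => u0 (a + IZR i * (h / INR r))) 0 (i + 1)%Z)
      <= eps / 3 ^ (N * r)) :
  forall j : Z,
    let w := efc dF h Dt (fun j => u0 (a + IZR j * h)) N in
    let uM := efc dF (h / INR r) (Dt / INR r)
                  (fun i => u0 (a + IZR i * (h / INR r))) (N * r) in
    let v := hermite_v (a + IZR j * h) (a + IZR (j + 1) * h) (w j) (w (j + 1)%Z) in
    Rabs (v 0 - uM (j * Z.of_nat r)%Z) <= eps /\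
    Rabs (w j - uM (j * Z.of_nat r)%Z) <= eps.
Proof.
  intros j w uM v.
  assert (Hr : 0 < INR r) by (apply lt_0_INR; lia).
  set (k := h / INR r) in *.
  assert (Hk : 0 < k) by (unfold k; apply Rdiv_lt_0_compat; lra).
  assert (Hkt : 0 < Dt / INR r) by (apply Rdiv_lt_0_compat; lra).
  set (zf := fun i => u0 (a + IZR i * k)) in *.
  set (zc := fun j => u0 (a + IZR j * h)) in *.
  set (D := eps / 3 ^ (N * r)) in *.
  assert (H3 : 0 < 3 ^ (N*r)) by (apply pow_lt; lra).
  assert (HD : eps = 3^(N*r) * D) by (unfold D; field; lra).
  assert (H0f : forall i, Rabs (zf i - zf (i+1)%Z) <= D) by exact Hinit.
  assert (Hcf : forall j, zc j = zf (j * Z.of_nat r)%Z).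
  { intro j0. unfold zc, zf, k. f_equal. rewrite mult_IZR, <- INR_IZR_INZ. field. lra. }
  assert (H0c : forall j, Rabs (zc j - zc (j+1)%Z) <= INR r * D).
  { intro j0. rewrite !Hcf. replace ((j0 + 1) * Z.of_nat r)%Z with (j0 * Z.of_nat r + Z.of_nat r)%Z by lia.
    apply tele; auto. }
  assert (Dc := driftb _ _ _ _ _ Hh HDt Hcoarse H0c N j). fold w in Dc.
  assert (Df := driftb _ _ _ _ _ Hk Hkt Hfine H0f (N*r) (j * Z.of_nat r)%Z). fold uM in Df.
  rewrite <- Hcf in Df.
  assert (Hv : v 0 = w j) by (unfold v, hermite_v; simpl; ring).
  rewrite Hv.
  assert (Key := keyineq N r ltac:(lia) ltac:(lia)).
  assert (HDp : 0 < D) by (unfold D; apply Rdiv_lt_0_compat; lra).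
  assert (Hfin : Rabs (w j - uM (j * Z.of_nat r)%Z) <= eps).
  { apply absb in Dc; apply absb in Df. apply Rabs_le.
    assert (INR r * 3^N * D <= 3^(N*r) * D) by (apply Rmult_le_compat_r; lra).
    split; nra. }
  split; exact Hfin.
Qed.
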